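(* Let $X$ be a $\mathbb{Z}^n$-periodic discrete metric space with $N$ orbits and let $A\in\mathcal{W}(X)$ be $\mathbb{Z}^n$-periodic ($T_\alpha A=AT_\alpha$ for all $\alpha$). Then $UAU^{-1}$ is a shift-invariant operator in $W(\mathbb{Z}^n,\mathbb{C}^N)$: $UAU^{-1}=\sum_{\beta\in\mathbb{Z}^n}r_A(\beta)V_\beta$, where $r_A(\beta)=(r_A^{ij}(\beta,0))_{i,j=1}^N$ are constant matrices with $|r_A^{ij}(\beta,0)|\le h(\beta)$ for some nonnegative $h\in l^1(\mathbb{Z}^n)$; in particular $A$ is isometrically equivalent (via the isometry $U$) to this shift-invariant matrix operator.
   Context: A discrete metric space is a countable set $X$ with a metric $\rho$ such that every ball is finite. It is $\mathbb{Z}^n$-periodic if $\mathbb{Z}^n$ acts on $X$ by $\rho$-isometries, $(\alpha,x)\mapsto\alpha\cdot x$ (a group action), freely, with finitely many orbits; $x_1,\dots,x_N$ are fixed orbit representatives. $U$: $(Uf)(\alpha)=(f(\alpha\cdot x_1),\dots,f(\alpha\cdot x_N))$, an isometry $l^p(X)\to l^p(\mathbb{Z}^n,\mathbb{C}^N)$. $(T_\alpha u)(x)=u((-\alpha)\cdot x)$, $(V_\beta u)(x)=u(x-\beta)$. For a linear operator $A$ with generating function $k_A$ (i.e. $(Au)(x)=\sum_y k_A(x,y)u(y)$ for finitely supported $u$), $r_A^{ij}(\alpha,\beta)=k_A(\alpha\cdot x_i,\beta\cdot x_j)$. $\mathcal{W}(X)$: such operators with $\max_j\sum_i|r_A^{ij}(\alpha,\beta)|\le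 h_A(\alpha-\beta)$ for some $h_A\in l^1(\mathbb{Z}^n)$. $W(\mathbb{Z}^n,\mathbb{C}^N)$: operators $\sum_\alpha a_\alpha V_\alpha$, $a_\alpha\in l^\infty(\mathbb{Z}^n,\mathbb{C}^{N\times N})$, with $\sum_\alpha\|a_\alpha\|_{l^\infty}<\infty$. *)

(* Defs.v *)
From HB Require Import structures.
From mathcomp Require Import all_boot all_order all_algebra.
From mathcomp Require Import boolp classical_sets cardinality fsbigop reals ereal esum.
From mathcomp Require Import complex.
Set Implicit Arguments. Unset Strict Implicit. Unset Printing Implicit Defensive.
Import Order.TTheory GRing.Theory Num.Theory.
Local Open Scope ring_scope.
Local Open Scope classical_set_scope.

Notation Zn n := ('rV[int]_n).

Section Defs.
Variable R : realType.
Local Notation C := (R[i]).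

Definition is_metric (X : choiceType) (rho : X -> X -> R) : Prop :=
  [/\ forall x y, 0 <= rho x y,
      forall x y, rho x y = 0 <-> x = y,
      forall x y, rho x y = rho y x &
      forall x y z, rho x z <= rho x y + rho y z].

Definition discrete_metric_space (X : countType) (rho : X -> X -> R) : Prop :=
  is_metric rho /\ forall x r, finite_set [set y | rho x y <= r].

Definition periodic_dms (n N : nat) (X : countType) (rho : X -> X -> R)
    (act : Zn n -> X -> X) (xs : 'I_N -> X) : Prop :=
  [/\ discrete_metric_space rho,
      ((forall x, act 0 x = x) /\ (forall a b x, act (a + b) x = act a (act b x))),
      (forall a x y, rho (act a x) (act a y) = rho x y),
      (forall a x, act a x = x -> a = 0) &
      (forall x, exists i a, x = act a (xs i)) /\
      (forall i j a, act a (xs i) = xs j -> i = j)].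

Definition fin_supp (X : choiceType) (u : X -> C) : Prop := finite_set [set x | u x != 0].
Definition fin_supp_vec (n N : nat) (v : Zn n -> 'I_N -> C) : Prop :=
  finite_set [set a | exists j, v a j != 0].

Definition kop (X : choiceType) (k : X -> X -> C) (u : X -> C) : X -> C :=
  fun x => \sum_(y \in [set y | u y != 0]) k x y * u y.

Definition Tshift (n : nat) (X : choiceType) (act : Zn n -> X -> X) (a : Zn n)
    (u : X -> C) : X -> C := fun x => u (act (- a) x).

Definition Vshift (n N : nat) (b : Zn n) (v : Zn n -> 'I_N -> C) : Zn n -> 'I_N -> C :=
  fun a => v (a - b).

Definition Uop (n N : nat) (X : choiceType) (act : Zn n -> X -> X) (xs : 'I_N -> X)
    (f : X -> C) : Zn n -> 'I_N -> C := fun a i => f (act a (xs i)).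

(* U^{-1}: (U^{-1} v)(a.x_i) = v a i  (well defined for a periodic space) *)
Definition Uinv (n N : nat) (X : choiceType) (act : Zn n -> X -> X) (xs : 'I_N -> X)
    (v : Zn n -> 'I_N -> C) : X -> C :=
  fun x => \sum_(i < N)
    match pselect (exists a, act a (xs i) = x) with
    | left H => v (projT1 (cid H)) i
    | right _ => 0
    end.

Definition rker (n N : nat) (X : choiceType) (act : Zn n -> X -> X) (xs : 'I_N -> X)
    (k : X -> X -> C) (a b : Zn n) (i j : 'I_N) : C := k (act a (xs i)) (act b (xs j)).

Definition in_WX (n N : nat) (X : choiceType) (act : Zn n -> X -> X) (xs : 'I_N -> X)
    (k : X -> X -> C) : Prop :=
  exists h : Zn n -> R, summable setT (fun a => (h a)%:E) /\
    forall a b j, \sum_(i < N) `|rker act xs k a b i j| <= ((h (a - b))%:C)%C.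

(* The shift-invariant matrix operator  sum_b r(b) V_b  applied to a finitely
   supported v (the sum is restricted to the finitely many nonzero terms). *)
Definition shift_inv_op (n N : nat) (r : Zn n -> 'M[C]_N)
    (v : Zn n -> 'I_N -> C) : Zn n -> 'I_N -> C :=
  fun a i => \sum_(b \in [set b | exists j, Vshift b v a j != 0])
               \sum_(j < N) r b i j * Vshift b v a j.

End Defs.

(* Main.v *)
Require Import Defs.
From HB Require Import structures.
From mathcomp Require Import all_boot all_order all_algebra.
From mathcomp Require Import boolp classical_sets cardinality fsbigop reals ereal esum.
From mathcomp Require Import complex.
From mathcomp Require Import functions.
Import Order.TTheory GRing.Theory Num.Theory.
Local Open Scope ring_scope.
Local Open Scope classical_set_scope.

Theorem proposition4p2 (R : realType) (n N : nat) (X : countType)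
    (rho : X -> X -> R) (act : Zn n -> X -> X) (xs : 'I_N -> X)
    (k : X -> X -> R[i]) :
  periodic_dms rho act xs ->
  in_WX act xs k ->
  (forall (a : Zn n) (u : X -> R[i]), fin_supp u ->
     Tshift act a (kop k u) = kop k (Tshift act a u)) ->
  exists h : Zn n -> R,
    [/\ (forall b, 0 <= h b),
        summable setT (fun b => (h b)%:E),
        (forall b i j, `|rker act xs k b 0 i j| <= ((h b)%:C)%C) &
        forall v : Zn n -> 'I_N -> R[i], fin_supp_vec v ->
          Uop act xs (kop k (Uinv act xs v))
          = shift_inv_op (fun b => \matrix_(i, j) rker act xs k b 0 i j) v].
Proof.
move=> [Hdms [act0 actD] Hiso Hfree [Hcov Hdist]] [h0 [h0sum h0b]] Hper.
have actK a x : act a (act (- a) x) = x by rewrite -actD subrr act0.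
have actKV a x : act (- a) (act a x) = x by rewrite -actD addNr act0.
have actinj a c x : act a x = act c x -> a = c.
  move=> E; have : act (- c + a) x = x by rewrite actD E actKV.
  by move/Hfree => /eqP; rewrite addrC subr_eq0 => /eqP.
have shk a x y : k (act (- a) x) y = k x (act a y).
  pose u := fun z : X => if z == y then 1 else 0 : R[i].
  have Su : [set z | u z != 0] = [set y].
    apply/funext => z /=; apply/propext; rewrite /u; case: (eqVneq z y) => [->|Nz].
      by split=> // _; rewrite oner_eq0.
    by split=> //; rewrite eqxx // => E; rewrite E eqxx in Nz.
  have fu : fin_supp u by rewrite /fin_supp Su; exact: finite_set1.
  have := congr1 (fun f => f x) (Hper a u fu).
  rewrite /Tshift /kop Su.
  have STu : [set z | u (act (- a) z) != 0] = [set act a y].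
    apply/funext => z /=; apply/propext; rewrite /u.
    case: (eqVneq (act (- a) z) y) => [<-|Nz].
      by split=> // _; rewrite actK.
    split; first by rewrite eqxx.
    by move=> E; rewrite E actKV eqxx in Nz.
  rewrite STu !fsbig_set1 /u actKV !eqxx !mulr1 => ->.
  done.
have rsh a b i j : rker act xs k a b i j = rker act xs k (a - b) 0 i j.
  by rewrite /rker act0 -shk -actD addrC.
exists (fun b => Num.norm (h0 b)); split.
- by move=> b; exact: normr_ge0.
- move: h0sum; rewrite /summable.
  have -> : (fun b => `|((`|h0 b|)%:E)|%E) = (fun b => `|(h0 b)%:E|%E) :> (Zn n -> \bar R).
    by apply/funext => b /=; rewrite normr_id.
  done.
- move=> b i j; have := h0b b 0 j; rewrite subr0 => Hb.
  apply: le_trans; last first.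
    apply: le_trans Hb _; rewrite lecR; exact: ler_norm.
  rewrite (bigD1 i) //= lerDl; apply: sumr_ge0 => l _; exact: normr_ge0.
- move=> v fv; apply/funext => a; apply/funext => i.
  have orb c c' l l' : act c (xs l) = act c' (xs l') -> l = l' /\ c = c'.
    move=> E; have E2 : act (- c' + c) (xs l) = xs l' by rewrite actD E actKV.
    have ll := Hdist _ _ _ E2; subst l'; split => //; exact: actinj E.
  have UinvE c j : Uinv act xs v (act c (xs j)) = v c j.
    rewrite /Uinv (bigD1 j) //= big1 ?addr0.
      case: pselect => [H|H].
        by case: (cid H) => a' Ha' /=; rewrite (actinj _ _ _ Ha').
      by exfalso; apply: H; exists c.
    move=> l Nl; case: pselect => // H; have [a' /orb [El _]] := H.
    by rewrite El eqxx in Nl.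
  have sumT (G : 'I_N -> R[i]) : \sum_(j \in [set: 'I_N]) G j = \sum_(j < N) G j.
    rewrite [RHS](bigfs _ _ (P := predT)) ?index_enum_uniq //; last first.
      by move=> j _; rewrite mem_index_enum.
    have -> : [set` (predT : pred 'I_N)] = [set: 'I_N] by apply/seteqP; split => x.
    by [].
  rewrite /Uop /kop /shift_inv_op /Vshift.
  set D := [set c | exists j, v c j != 0].
  set P := D `*` [set: 'I_N].
  pose phi := fun p : Zn n * 'I_N => act p.1 (xs p.2).
  rewrite (fsbig_widen [set y | Uinv act xs v y != 0] (phi @` P) (fun y => k (act a (xs i)) y * Uinv act xs v y)); last 2 first.
  - move=> y /= Hy; have [j [c Ey]] := Hcov y; subst y.
    rewrite UinvE in Hy; exists (c, j) => //; split => //; by exists j.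
  - move=> y [[[c j] [Pc _] E] Ny]; subst y.
    have H0 : Uinv act xs v (phi (c, j)) = 0.
      by apply/eqP; apply: contra_notT Ny.
    by rewrite /preimage /= H0 mulr0.
  rewrite fsbig_image; last first.
    move=> [c j] [c' j'] _ _ /orb [El Ec]; simpl in El, Ec; by rewrite El Ec.
  rewrite -(@pair_fsbig _ _ _ _ _ D [set: 'I_N] (fun c j => k (act a (xs i)) (act c (xs j)) * Uinv act xs v (act c (xs j)))) //; last exact: finite_finset.
  have aK c : a - (a - c) = c by rewrite opprB addrC subrK.
  transitivity (\sum_(c \in D) \sum_(j < N) rker act xs k (a - c) 0 i j * v c j).
    apply: eq_fsbigr => c _; rewrite sumT; apply: eq_bigr => j _.
    by rewrite UinvE; congr (_ * _); exact: rsh.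
  have -> : D = (fun b => a - b) @` [set b | exists j, v (a - b) j != 0].
    apply/seteqP; split => [c [j Dc]|c [b [j Bb] <-]].
      by exists (a - c) => //; exists j; rewrite aK.
    by exists j.
  rewrite fsbig_image; last by move=> b b' _ _ /addrI /oppr_inj.
  apply: eq_fsbigr => b _; apply: eq_bigr => j _.
  by rewrite mxE aK.
Qed.
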